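(* Let $n\ge2$ and let $A$ be an $n\times n$ binary matrix with zero diagonal. The facets-pairing structure $\mathcal{F}_A$ on $\mathcal{C}^n$ is perfect if and only if $A$ is a Bott matrix.
   Context: $\mathcal{C}^n=\{x\in\mathbb{R}^n: -\tfrac14\le x_i\le\tfrac14\}$; $\mathbf{F}(i)$, $\mathbf{F}(-i)$ ($1\le i\le n$) are the facets in $\{x_i=\tfrac14\}$, $\{x_i=-\tfrac14\}$. Binary matrices have entries in $\mathbb{Z}_2$; $A^i_k$ denotes the $(i,k)$ entry viewed as $0$ or $1$. A Bott matrix is a binary square matrix conjugate by a permutation matrix to a strictly upper triangular binary matrix. $\mathcal{F}_A$ pairs $\mathbf{F}(j)$ with $\mathbf{F}(-j)$ via $\tau^A_j:\mathbf{F}(j)\to\mathbf{F}(-j)$, $\tau^A_j(x)=y$ with $y_{|j|}=-x_{|j|}$ and $y_k=(-1)^{A^{|j|}_k}x_k$ for $k\ne|j|$. A composition $\tau^A_{k_m}\circ\dots\circ\tau^A_{k_1}$ applied to a proper face $f$ is valid if $f\subset\mathbf{F}(k_1)$ and $\tau^A_{k_i}\circ\dots\circ\tau^A_{k_1}(f)\subset\mathbf{F}(k_{i+1})$ for $1\le i<m$ ($m=0$ allowed). The face family $\widehat f$ is the set of faces $\tau^A_{k_m}\circ\dots\circ\tau^A_{k_1}(f)$ over all valid compositions. $\mathcal{F}_A$ is perfect if for every proper face $f$ of codimension $s$, $\widehat f$ has exactly $2^s$ elements. *)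

(* Defs.v *)
From HB Require Import structures.
From mathcomp Require Import all_boot all_order all_algebra all_fingroup.
Set Implicit Arguments. Unset Strict Implicit. Unset Printing Implicit Defensive.
Import GRing.Theory.
Local Open Scope ring_scope.

(* A face of C^n = [-1/4,1/4]^n is encoded by its sign vector:
   f k = None        : coordinate k is free in [-1/4,1/4];
   f k = Some true   : coordinate k is fixed to  1/4;
   f k = Some false  : coordinate k is fixed to -1/4.
   The face f is the set { x | forall k, f k = Some b -> x_k = (if b then 1/4 else -1/4) }.
   (The whole cube is the face with all coordinates free.) *)
Definition face (n : nat) := {ffun 'I_n -> option bool}.

Definition codim n (f : face n) : nat := #|[set k | f k != None]|.

Definition proper_face n (f : face n) : bool := (0 < codim f)%N.

(* Facet index j in {±1,...,±n}: encoded as (|j|, sign j), sign true = +. *)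
Definition facet_idx (n : nat) := ('I_n * bool)%type.

Definition in_facet n (f : face n) (j : facet_idx n) : bool := f j.1 == Some j.2.

(* Image of a face contained in F(j) under tau^A_j :
   y_{|j|} = - x_{|j|},  y_k = (-1)^{A^{|j|}_k} x_k  (k <> |j|). *)
Definition tau_face n (A : 'M['F_2]_n) (j : facet_idx n) (f : face n) : face n :=
  [ffun k => if k == j.1 then omap negb (f k)
             else if A j.1 k == 1 then omap negb (f k) else f k].

(* Apply the composition tau_{k_m} o ... o tau_{k_1} (ks = [k_1;...;k_m]) to f;
   returns None if the composition is not valid. *)
Fixpoint apply_seq n (A : 'M['F_2]_n) (f : face n) (ks : seq (facet_idx n)) : option (face n) :=
  match ks with
  | [::] => Some f
  | j :: ks' => if in_facet f j then apply_seq A (tau_face A j f) ks' else None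
  end.

Definition in_family n (A : 'M['F_2]_n) (f g : face n) : Prop :=
  exists ks : seq (facet_idx n), apply_seq A f ks = Some g.

Definition perfect n (A : 'M['F_2]_n) : Prop :=
  forall f : face n, proper_face f ->
    exists S : {set face n}, (forall g, g \in S <-> in_family A f g) /\ #|S| = (2 ^ codim f)%N.

Definition strictly_upper n (B : 'M['F_2]_n) : bool :=
  [forall i : 'I_n, forall j : 'I_n, (j <= i)%N ==> (B i j == 0)].

Definition bott_matrix n (A : 'M['F_2]_n) : Prop :=
  exists s : 'S_n, strictly_upper (perm_mx s *m A *m invmx (perm_mx s)).

Definition zero_diag n (A : 'M['F_2]_n) : bool := [forall i : 'I_n, A i i == 0].

(* Main.v *)
Require Import Defs.
From mathcomp Require Import all_boot all_order all_algebra all_fingroup.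
From mathcomp Require Import zify.
Set Implicit Arguments. Unset Strict Implicit. Unset Printing Implicit Defensive.
Import GRing.Theory.
Local Open Scope ring_scope.

Lemma invmx_perm n (s : 'S_n) : invmx (perm_mx s) = perm_mx (s^-1)%g :> 'M['F_2]_n.
Proof.
have H1 : perm_mx (s^-1)%g *m perm_mx s = 1%:M :> 'M['F_2]_n by rewrite -perm_mxM mulVg perm_mx1.
rewrite -[RHS]mulmx1 -(mulmxV (unitmx_perm _ s)) mulmxA H1 mul1mx //.
Qed.

Lemma conj_entry n (A : 'M['F_2]_n) (s : 'S_n) i j :
  (perm_mx s *m A *m invmx (perm_mx s)) i j = A (s i) (s j).
Proof. by rewrite invmx_perm -row_permE -col_permE !mxE. Qed.

Lemma F2_cases (x : 'F_2) : x = 0%R \/ x = 1%R.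
Proof. case: x => [[|[|m]]] //= Hm; [left|right]; exact: val_inj. Qed.

Lemma bott_rank n (A : 'M['F_2]_n) : bott_matrix A ->
  exists s : 'S_n, forall x y, A x y == 1%R -> ((s^-1)%g x < (s^-1)%g y)%N.
Proof.
case=> s /forallP Hs; exists s => x y Hxy; rewrite ltnNge; apply/negP => Hle.
have := Hs ((s^-1)%g x) => /forallP /(_ ((s^-1)%g y)) /implyP /(_ Hle).
by rewrite conj_entry !permKV (eqP Hxy).
Qed.
Lemma tau_supp n (A : 'M['F_2]_n) j (f : face n) k :
  (tau_face A j f k != None) = (f k != None).
Proof. by rewrite ffunE; case: ifP => _; [|case: ifP => _]; case: (f k). Qed.

Lemma apply_seq_supp n (A : 'M['F_2]_n) ks (f g : face n) :
  apply_seq A f ks = Some g -> forall k, (g k != None) = (f k != None).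
Proof.
elim: ks f => [|j ks IH] f /=; first by case=> ->.
case: ifP => // _ /IH H k; by rewrite H tau_supp.
Qed.
Definition suppset n (D : {set 'I_n}) : {set face n} :=
  [set g : face n | [forall k, (g k != None) == (k \in D)]].

Lemma card_suppset n (D : {set 'I_n}) : #|suppset D| = (2 ^ #|D|)%N.
Proof.
pose F := fun k : 'I_n => if k \in D then [pred o : option bool | o != None]
                          else [pred o : option bool | o == None].
have -> : suppset D = [set g : face n | g \in family F].
  apply/setP=> g; rewrite !inE; apply/forallP/familyP => H k; have:= H k;
  rewrite /F; case: (k \in D) => /=; case: (g k) => //.
rewrite cardsE card_family.
rewrite foldrE big_image /=.
transitivity (\prod_(k < n) (if k \in D then 2 else 1))%N.
  apply: eq_bigr => k _; rewrite /F; case: (k \in D).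
  - rewrite (@eq_card _ _ [pred o | o \in [:: Some true; Some false]]).
      by apply/card_uniqP. by case=> [[]|].
  - rewrite (@eq_card _ _ (pred1 None)); first by rewrite card1. by [].
by rewrite -big_mkcond /= prod_nat_const.
Qed.

Definition par n (C : {set 'I_n}) (g : face n) :=
  \big[addb/false]_(k in C) (g k == Some true).

Section Parity.
Variables (n : nat) (A : 'M['F_2]_n) (C : {set 'I_n}).
Let e : rel 'I_n := fun x y => A x y == 1%R.
Hypothesis good : [forall x in C, exists y in C, (y != x) && [forall k in C, e x k == (k == y)]].

Lemma par_tau (f : face n) j : (forall k, (f k != None) = (k \in C)) ->
  in_facet f j -> par C (tau_face A j f) = par C f.
Proof.
move=> Hf; rewrite /in_facet => /eqP Hj.
have HC : j.1 \in C by rewrite -Hf Hj.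
have /forall_inP /(_ _ HC) /exists_inP [y yC /andP [Hyi /forall_inP Hy]] := good.
rewrite /par.
have -> : \big[addb/false]_(k in C) (tau_face A j f k == Some true) =
   \big[addb/false]_(k in C) ((f k == Some true) (+) ((k == j.1) || (k == y))).
  apply: eq_bigr => k kC; rewrite ffunE; have := Hf k; rewrite kC.
  have := Hy k kC; rewrite /e => /eqP <-.
  case: (f k) => // b _; case: (k == j.1) => /=; first by case: b.
  by case: (A j.1 k == 1%R) => /=; case: b.
rewrite big_split /=.
have -> : \big[addb/false]_(i in C) ((i == j.1) || (i == y)) = false; last by rewrite addbF.
rewrite (bigD1 j.1) //= eqxx /= (bigD1 y) /=; last by rewrite yC.
rewrite (negbTE Hyi) eqxx /= big1 ?addbF //.
by move=> k /andP [/andP [_ H1] H2]; rewrite (negbTE H1) (negbTE H2).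
Qed.

Lemma par_seq ks (f g : face n) : (forall k, (f k != None) = (k \in C)) ->
  apply_seq A f ks = Some g -> par C g = par C f.
Proof.
elim: ks f => [|j ks IH] f Hf /=; first by case=> ->.
case: ifP => // Hin /IH -> ; first exact: par_tau.
by move=> k; rewrite tau_supp.
Qed.

Lemma good_false : perfect A -> C != set0 -> False.
Proof.
move=> Hp /set0Pn [x0 x0C].
pose f0 : face n := [ffun k => if k \in C then Some true else None].
have Hf0 k : (f0 k != None) = (k \in C) by rewrite ffunE; case: (k \in C).
have Hcod : codim f0 = #|C| by rewrite /codim; apply: eq_card => k; rewrite inE Hf0.
have [S [HS HcS]] : exists S : {set face n}, (forall g, g \in S <-> in_family A f0 g) /\ #|S| = (2 ^ codim f0)%N.
  apply: Hp; rewrite /proper_face Hcod card_gt0; apply/set0Pn; by exists x0.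
pose g0 : face n := [ffun k => if k == x0 then Some false else f0 k].
have Hpar : par C g0 != par C f0.
  rewrite /par (bigD1 x0) //= [in X in _ != X](bigD1 x0) //= !ffunE eqxx x0C /=.
  rewrite (eq_bigr (fun k => f0 k == Some true)); first by case: (\big[addb/false]_(i in C | i != x0) _).
  by move=> k /andP [_ /negbTE Hk]; rewrite ffunE Hk.
have Hsub : S \subset suppset C :\ g0.
  apply/subsetP => g /HS [ks Hks]; rewrite !inE; apply/andP; split.
    apply/negP => /eqP Hg; move: Hpar; rewrite -Hg (par_seq Hf0 Hks) eqxx //.
  apply/forallP => k; by rewrite (apply_seq_supp Hks k) Hf0.
have := subset_leq_card Hsub.
have Hg0 : g0 \in suppset C.
  rewrite inE; apply/forallP => k; rewrite ffunE; case E: (k == x0); [by rewrite (eqP E) x0C | by rewrite Hf0].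
rewrite HcS Hcod -card_suppset (cardsD1 g0 (suppset C)) Hg0 /=.
by rewrite add1n ltnn.
Qed.
End Parity.

Section Cyc.
Variables (n : nat) (A : 'M['F_2]_n).
Let e : rel 'I_n := fun x y => A x y == 1%R.
Hypotheses (zd : zero_diag A) (Hp : perfect A).

Lemma e_irr x : e x x = false.
Proof. by have := forallP zd x; rewrite /e => /eqP ->. Qed.

Lemma no_cycle m c : (size c <= m)%N -> path.cycle e c -> (0 < size c)%N -> False.
Proof.
elim: m c => [|m IH] c Hs Hc Hpos; first by move: Hs Hpos; rewrite leqn0 => /eqP ->.
pose C := [set k | k \in c].
case Hg: [forall x in C, exists y in C, (y != x) && [forall k in C, e x k == (k == y)]].
  apply: (good_false Hg Hp); apply/set0Pn.
  move: Hpos; case Ec: c => [|a c0] // _; by exists a; rewrite inE Ec mem_head.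
move/negbT: Hg; rewrite negb_forall_in => /exists_inP [x xC].
rewrite negb_exists_in => /forall_inP Hx.
have xc : x \in c by rewrite inE in xC.
case: (rot_to xc) => i q Hrot.
have Hcq : path.cycle e (x :: q) by rewrite -Hrot rot_cycle.
have HCq k : (k \in C) = (k \in x :: q) by rewrite inE -Hrot mem_rot.
have Hsz : size (x :: q) = size c by rewrite -Hrot size_rot.
have Hcq' := Hcq; rewrite /= in Hcq'.
case Er: (rcons q x) Hcq' => [|nx r]; first by move: (congr1 size Er); rewrite size_rcons.
move=> /= /andP [Hxnx _].
have nxC : nx \in C by rewrite HCq -mem_rcons Er mem_head.
have nxx : nx != x by apply/negP => /eqP Hn; move: Hxnx; rewrite Hn e_irr.
have := Hx nx nxC; rewrite nxx /= negb_forall_in => /exists_inP [k kC Hk].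
have Hxk : e x k.
  case E: (e x k) => //; move: Hk; rewrite E; case: (k =P nx) => [Ek|_] //.
  by move: E; rewrite Ek Hxnx.
have knx : k != nx by apply/negP => /eqP Ek; move: Hk; rewrite Ek eqxx Hxnx.
have kq : k \in q.
  move: kC; rewrite HCq inE => /orP [/eqP Ek|//]; by move: Hxk; rewrite Ek e_irr.
case/splitPr: kq Er Hcq Hsz => q1 q2 Er Hcq Hsz.
case: q1 Er Hcq Hsz => [|a q1] Er Hcq Hsz.
  by move: Er knx => /= [-> _]; rewrite eqxx.
apply: (IH (x :: k :: q2)) => //.
- move: Hs; rewrite -Hsz /= size_cat /=; lia.
- move: Hcq; rewrite /= rcons_path cat_path last_cat /= => /and3P [_ /andP [_ /andP [_ H]] H2].
  by rewrite Hxk rcons_path H H2.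
Qed.

Lemma acyc_of_perfect z w : e z w -> connect e w z -> False.
Proof.
move=> Hzw /connectP [p Hp' Hz].
apply: (@no_cycle (size (w :: p)) (w :: p)) => //.
by rewrite /= rcons_path Hp' -Hz Hzw.
Qed.
End Cyc.
Lemma reach n (A : 'M['F_2]_n) (s : 'S_n)
  (Hs : forall x y, A x y == 1%R -> ((s^-1)%g x < (s^-1)%g y)%N) (f g : face n) :
  (forall k, (g k != None) = (f k != None)) -> in_family A f g.
Proof.
move=> Hsupp; move: f Hsupp.
suff H : forall m (f : face n), (forall k, (g k != None) = (f k != None)) ->
   (forall k, ((s^-1)%g k < n - m)%N -> f k = g k) -> in_family A f g.
  by move=> f Hf; apply: (H n) => // k; rewrite subnn.
elim=> [|m IH] {}f Hsp Hag.
  exists [::] => /=; congr Some; apply/ffunP => k; apply: Hag.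
  by rewrite subn0 ltn_ord.
case: (ltnP m n) => Hmn; last first.
  apply: IH => // k; have -> : (n - m = n - m.+1)%N by lia.
  exact: Hag.
have Hd : (n - m.+1 < n)%N by lia.
pose k0 := s (Ordinal Hd).
have rk0 : ((s^-1)%g k0 : nat) = (n - m.+1)%N by rewrite /k0 permK.
have rank_lt k : ((s^-1)%g k < n - m)%N -> ((s^-1)%g k < n - m.+1)%N \/ k = k0.
  move=> Hk; case: (ltnP ((s^-1)%g k) (n - m.+1)) => Hk2; first by left.
  right; have Heq : ((s^-1)%g k : nat) = (n - m.+1)%N.
    by apply/eqP; rewrite eqn_leq Hk2 andbT -ltnS (leq_trans Hk) // subnSK.
  by apply: (@perm_inj _ (s^-1)%g); apply: val_inj; rewrite /= Heq -rk0.
case E: (f k0 == g k0).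
  apply: IH => // k /rank_lt [/Hag //|->]; exact/eqP.
case Efk: (f k0) => [b|]; last first.
  have := Hsp k0; rewrite Efk /=; case Eg: (g k0) => //.
  by move: E; rewrite Efk Eg.
have [c Egk] : exists c, g k0 = Some c.
  by have := Hsp k0; rewrite Efk; case: (g k0) => // c _; exists c.
have Hcb : c = ~~ b by move: E; rewrite Efk Egk; case: (b); case: (c).
have [ks Hks] : in_family A (tau_face A (k0, b) f) g.
  apply: IH.
    by move=> k; rewrite tau_supp.
  move=> k Hk; rewrite ffunE /=; case: eqP => [->|Hne]; first by rewrite Efk Egk Hcb.
  case: ifP => HA.
    have := Hs _ _ HA; rewrite rk0 => Hlt.
    by move: Hk Hlt Hmn; lia.
  by case: (rank_lt _ Hk) => [/Hag //|/Hne].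
by exists ((k0, b) :: ks); rewrite /= /in_facet /= Efk eqxx.
Qed.
Section Acyc.
Variables (n : nat) (A : 'M['F_2]_n).
Let e : rel 'I_n := fun x y => A x y == 1%R.
Hypothesis acyc : forall z w, e z w -> connect e w z -> False.

Definition anc (y : 'I_n) := [set z | [exists w, e z w && connect e w y]].

Lemma anc_lt x y : e x y -> (#|anc x| < #|anc y|)%N.
Proof.
move=> Hxy; apply: proper_card; apply/properP; split.
  apply/subsetP => z; rewrite !inE => /existsP [w /andP [Hzw Hwx]].
  apply/existsP; exists w; rewrite Hzw /=; apply: connect_trans Hwx _.
  exact: connect1.
exists x; first by rewrite inE; apply/existsP; exists y; rewrite Hxy connect0.
rewrite inE; apply/existsP => [[w /andP [Hxw Hwx]]]; exact: acyc Hxw Hwx.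
Qed.

Definition key (x : 'I_n) := (#|anc x| * n + x)%N.

Lemma key_inj : injective key.
Proof.
move=> x y H; apply: val_inj => /=.
have := congr1 (modn^~ n) H; rewrite /key /= !modnMDl !modn_small //.
Qed.

Definition rk (x : 'I_n) := #|[set y | (key y < key x)%N]|.

Lemma rk_lt x : (rk x < n)%N.
Proof.
rewrite /rk -[X in (_ < X)%N]card_ord -cardsT; apply: proper_card; rewrite properT.
apply/negP => /eqP HS; have : x \in [set y | (key y < key x)%N] by rewrite HS inE.
by rewrite inE ltnn.
Qed.

Lemma rk_mono x y : (key x < key y)%N -> (rk x < rk y)%N.
Proof.
move=> Hxy; apply: proper_card; apply/properP; split.
  by apply/subsetP => z; rewrite !inE => H; apply: ltn_trans Hxy.
by exists x; rewrite !inE ?ltnn.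
Qed.

Lemma rk_inj : injective (fun x => Ordinal (rk_lt x)).
Proof.
move=> x y /(congr1 val) /= H; apply/eqP; apply/negPn/negP => Hne.
have Hk : key x != key y by apply: contra Hne => /eqP /key_inj ->.
case: (ltngtP (key x) (key y)) Hk => // [/rk_mono|/rk_mono]; by rewrite H ltnn.
Qed.

Lemma bott_of_acyc : bott_matrix A.
Proof.
exists ((perm rk_inj)^-1)%g.
apply/forallP => i; apply/forallP => j; apply/implyP => Hji.
rewrite invmx_perm -row_permE -col_permE !mxE.
set x := _ i; set y := _ j.
case: (F2_cases (A x y)) => [->//|Hxy].
have : (rk x < rk y)%N by apply/rk_mono; rewrite /key; have := anc_lt (introT eqP Hxy); have := ltn_ord x; have := ltn_ord y; nia.
have -> : rk x = perm rk_inj x by rewrite permE.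
have -> : rk y = perm rk_inj y by rewrite permE.
by rewrite /x /y !permKV ltnNge Hji.
Qed.
End Acyc.

Theorem mainTheorem12 (n : nat) (A : 'M['F_2]_n) :
  (2 <= n)%N -> zero_diag A -> (perfect A <-> bott_matrix A).
Proof.
move=> _ zd; split.
  by move=> Hp; apply: bott_of_acyc; exact: acyc_of_perfect zd Hp.
move=> /bott_rank [s Hs] f _; exists (suppset [set k | f k != None]); split; last first.
  by rewrite card_suppset.
move=> g; split.
  rewrite inE => /forallP H; apply: (reach Hs) => k; have := H k; by rewrite inE => /eqP.
move=> [ks Hks]; rewrite inE; apply/forallP => k; by rewrite inE (apply_seq_supp Hks k).
Qed.
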